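(* Let $p$ be an odd prime, $G=\mathrm{PGL}_n(\mathbb{C})$ where $p^s\mid n$, $p^{s+1}\nmid n$, $s\ge1$. Let $\bar A$ be a toral elementary abelian $p$-subgroup of $G$ of rank $r$ with $1\le r\le s$. If $C_G(\bar A)$ is connected, then $\bar A$ contains an element of order $p$ not $G$-conjugate to $e_{n/p}$.
   Context: Toral: contained in a maximal torus. With $\alpha=e^{2\pi i/p}$ and $n=pk$, $e_{n/p}$ is the image in $G$ of $\mathrm{diag}(I_k,\alpha I_k,\dots,\alpha^{p-1}I_k)$. *)

(* Defs.v *)
From HB Require Import structures.
From mathcomp Require Import all_boot all_order all_algebra.
From mathcomp Require Import all_classical all_reals all_analysis.
From mathcomp Require Import complex.
Import numFieldTopology.Exports numFieldNormedType.Exports.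
Import Order.TTheory GRing.Theory Num.Theory.

Set Implicit Arguments.
Unset Strict Implicit.
Unset Printing Implicit Defensive.

Local Open Scope classical_set_scope.
Local Open Scope ring_scope.
Local Open Scope quotient_scope.

(* As a numClosedFieldType it carries its Euclidean (modulus) topology;
   matrices 'M[CC R]_n carry the product (Euclidean) topology. *)
Definition CC (R : realType) : numClosedFieldType := R[i].

Section PGL.
Variables (R : realType) (n : nat).
Local Notation C := (CC R).
Local Notation M := 'M[C]_n.

Definition projrel : rel M :=
  fun A B => `[< exists2 c : C, c != 0 & B = c *: A >].

Lemma projrel_refl : reflexive projrel.
Proof. by move=> A; apply/asboolP; exists 1; [exact: oner_neq0 | rewrite scale1r]. Qed.

Lemma projrel_sym : symmetric projrel.
Proof.
suff H : forall A B, projrel A B -> projrel B A.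
  by move=> A B; apply/idP/idP => /H.
move=> A B /asboolP [c c0 ->]; apply/asboolP; exists c^-1.
  by rewrite invr_eq0.
by rewrite scalerA mulVf // scale1r.
Qed.

Lemma projrel_trans : transitive projrel.
Proof.
move=> B A D /asboolP [c c0 ->] /asboolP [d d0 ->]; apply/asboolP.
by exists (d * c); [rewrite mulf_neq0 | rewrite scalerA].
Qed.

Canonical projrel_equiv :=
  EquivRel projrel projrel_refl projrel_sym projrel_trans.

(* M_n(C) modulo nonzero scalars, with the quotient topology.  PGL_n(C) is the
   (open, saturated) subset of classes of invertible matrices, see [PGL]. *)
Definition PGLq : topologicalType := quotient_topology {eq_quot projrel}.

Definition pgl_pi (A : M) : PGLq := \pi_PGLq A.

Definition PGL : set PGLq := [set x | repr x \in unitmx].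
Definition pgl_one : PGLq := pgl_pi 1%:M.
Definition pgl_mul (x y : PGLq) : PGLq := pgl_pi (repr x *m repr y).
Definition pgl_inv (x : PGLq) : PGLq := pgl_pi (invmx (repr x)).
Fixpoint pgl_exp (x : PGLq) (k : nat) : PGLq :=
  if k is k'.+1 then pgl_mul x (pgl_exp x k') else pgl_one.

Definition pgl_has_order (x : PGLq) (k : nat) : Prop :=
  [/\ (0 < k)%N, pgl_exp x k = pgl_one &
      forall j : nat, (0 < j < k)%N -> pgl_exp x j <> pgl_one].

Definition pgl_conjugate (x y : PGLq) : Prop :=
  exists2 g, PGL g & pgl_mul (pgl_mul g x) (pgl_inv g) = y.

Definition elem_abelian_psubgroup (p r : nat) (A : set PGLq) : Prop :=
  [/\ A `<=` PGL, A pgl_one,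
      (forall x y, A x -> A y -> A (pgl_mul x y)) &
      (forall x, A x -> A (pgl_inv x))] /\
  [/\ (forall x y, A x -> A y -> pgl_mul x y = pgl_mul y x),
      (forall x, A x -> pgl_exp x p = pgl_one) &
      (A #= [set: 'I_(p ^ r)])%card].

(* The maximal tori of PGL_n(C) are the images of the maximal tori of GL_n(C),
   i.e. the conjugates g T g^-1 of the image T of the diagonal torus. *)
Definition max_torus (g : M) : set PGLq :=
  [set pgl_pi (g *m D *m invmx g) | D in [set D : M | is_diag_mx D /\ D \in unitmx]].

Definition toral (A : set PGLq) : Prop :=
  exists2 g : M, g \in unitmx & A `<=` max_torus g.

Definition centralizer (A : set PGLq) : set PGLq :=
  [set g | PGL g /\ forall x, A x -> pgl_mul g x = pgl_mul x g].

Definition alpha (p : nat) : C :=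
  Complex (cos (2 * pi / p%:R)) (sin (2 * pi / p%:R)).

(* diag(I_k, alpha I_k, ..., alpha^{p-1} I_k), k = n/p: entry j lies in block j %/ k *)
Definition e_mat (p : nat) : M :=
  diag_mx (\row_(j < n) alpha p ^+ (j %/ (n %/ p))%N).

Definition e_elt (p : nat) : PGLq := pgl_pi (e_mat p).

End PGL.

(* Main.v *)
Require Import Defs.
From HB Require Import structures.
From mathcomp Require Import all_boot all_order all_algebra.
From mathcomp Require Import all_classical all_reals all_analysis.
From mathcomp Require Import complex.
From mathcomp Require Import perm.
Import numFieldTopology.Exports numFieldNormedType.Exports.
Import Order.TTheory GRing.Theory Num.Theory.
Set Implicit Arguments.
Unset Strict Implicit.
Unset Printing Implicit Defensive.
Local Open Scope classical_set_scope.
Local Open Scope ring_scope.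
Local Open Scope quotient_scope.
Section S.
Variables (R : realType) (n : nat).
Local Notation C := (CC R).
Local Notation M := 'M[C]_n.
Local Notation PG := (PGLq R n).

Lemma piP (A B : M) : pgl_pi A = pgl_pi B <-> exists2 c : C, c != 0 & B = c *: A.
Proof.
rewrite /pgl_pi; split.
  move=> /eqmodP H. by move/asboolP: H.
move=> H; apply/eqmodP; exact/asboolP.
Qed.

Lemma piK (x : PG) : pgl_pi (repr x) = x.
Proof. exact: reprK. Qed.

Lemma repr_pi (A : M) : exists2 c : C, c != 0 & repr (pgl_pi A) = c *: A.
Proof. by apply/piP; rewrite piK. Qed.

Lemma pi_scale (c : C) (A : M) : c != 0 -> pgl_pi (c *: A) = pgl_pi A.
Proof.
move=> c0; apply/piP; exists c^-1; first by rewrite invr_eq0.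
by rewrite scalerA mulVf // scale1r.
Qed.

Lemma mul_pi (A B : M) : pgl_mul (pgl_pi A) (pgl_pi B) = pgl_pi (A *m B).
Proof.
rewrite /pgl_mul; have [c c0 ->] := repr_pi A; have [d d0 ->] := repr_pi B.
by rewrite -scalemxAr -scalemxAl scalerA pi_scale // mulf_neq0.
Qed.

Definition mpow (X : M) k := iter k (mulmx X) 1%:M.

Lemma exp_pi (x : PG) k : pgl_exp x k = pgl_pi (mpow (repr x) k).
Proof.
elim: k => [//|k IH] /=.
by rewrite IH -{1}(piK x) mul_pi.
Qed.

Lemma mpowD X a b : mpow X (a + b) = mpow X a *m mpow X b.
Proof. elim: a => [|a IH] /=; first by rewrite mul1mx. by rewrite IH mulmxA. Qed.

Lemma mpowM X a b : mpow X (a * b) = mpow (mpow X a) b.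
Proof.
elim: b => [|b IH]; first by rewrite muln0.
by rewrite mulnS mpowD IH.
Qed.

Lemma mpow_scalar (c : C) k : mpow c%:M k = (c ^+ k)%:M.
Proof.
elim: k => [|k IH] /=; first by rewrite expr0.
by rewrite IH -scalar_mxM exprS.
Qed.

Lemma mpowZ (c : C) X k : mpow (c *: X) k = c ^+ k *: mpow X k.
Proof.
elim: k => [|k IH] /=; first by rewrite expr0 scale1r.
by rewrite IH -scalemxAl -scalemxAr scalerA exprS.
Qed.

End S.
Section T.
Variables (R : realType).
Local Notation C := (CC R).

Lemma cmulE (a b c d : R) : (Complex a b : C) * Complex c d = Complex (a * c - b * d) (a * d + b * c).
Proof. by []. Qed.

Lemma alphaX (p k : nat) : alpha R p ^+ k = Complex (cos ((2 * pi / p%:R) *+ k)) (sin ((2 * pi / p%:R) *+ k)).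
Proof.
elim: k => [|k IH]; first by rewrite expr0 !mulr0n cos0 sin0.
rewrite exprS IH /alpha cmulE; set t := 2 * pi / p%:R.
by rewrite (mulrS t) cosD sinD (addrC (sin t * _)).
Qed.
End T.
Section T2.
Variables (R : realType) (p : nat).
Hypothesis p3 : (2 < p)%N.
Local Notation C := (CC R).

Lemma alpha_p : alpha R p ^+ p = 1.
Proof.
rewrite alphaX -mulr_natr mulfVK; last by rewrite pnatr_eq0 -lt0n (ltn_trans _ p3).
by rewrite mulr_natl cos2pi sin2pi.
Qed.

Lemma alpha_neq1 : alpha R p != 1.
Proof.
apply/eqP => /(congr1 (fun z : R[i] => let: Complex _ b := z in b)) /= H.
have : 0 < sin (2 * pi / p%:R) :> R.
  apply: sin_gt0_pi; apply/andP; split.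
    by rewrite divr_gt0 // ?mulr_gt0 ?pi_gt0 // ltr0n (ltn_trans _ p3).
  rewrite ltr_pdivrMr ?ltr0n ?(ltn_trans _ p3) // [pi * _]mulrC ltr_pM2r ?pi_gt0 //.
  by rewrite ltr_nat.
by rewrite H ltxx.
Qed.

Lemma alpha_prim : prime p -> p.-primitive_root (alpha R p).
Proof.
move=> pp.
have [m pm mp] := prim_order_exists (ltn_trans (isT : (0 < 2)%N) p3) alpha_p.
have [m1|m1] := eqVneq m 1%N.
  move: pm; rewrite m1 => /prim_expr_order; rewrite expr1 => a1.
  by have := alpha_neq1; rewrite a1 eqxx.
by move/(prime_nt_dvdP pp m1): mp => mp; move: pm; rewrite mp.
Qed.
End T2.

Lemma sum_blocks (V : zmodType) (f : nat -> V) (m k : nat) : (0 < m)%N ->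
  \sum_(0 <= j < m * k) f (j %/ m)%N = (\sum_(0 <= i < k) f i) *+ m.
Proof.
move=> m0; elim: k => [|k IH]; first by rewrite muln0 !big_geq // mul0rn.
rewrite mulnS addnC (big_cat_nat _ (leq_addr m _)) //= IH big_nat_recr //= mulrnDl.
congr (_ + _).
rewrite -{1}(add0n (m * k)%N) big_addn addKn.
rewrite (@eq_big_nat _ _ _ 0 m _ (fun _ => f k)); first by rewrite sumr_const_nat subn0.
by move=> i /andP[_ im]; rewrite addnC mulnC divnMDl // divn_small // addn0.
Qed.

Lemma tr_e (R : realType) (n p : nat) : prime p -> (2 < p)%N -> (p %| n)%N -> (0 < n)%N ->
  \tr (e_mat R n p) = 0.
Proof.
move=> pp p3 pn n0.
have m0 : (0 < n %/ p)%N by rewrite divn_gt0 ?prime_gt0 // dvdn_leq.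
rewrite /e_mat mxtrace_diag.
rewrite (eq_bigr (fun j : 'I_n => alpha R p ^+ (j %/ (n %/ p)))); last by move=> j _; rewrite mxE.
rewrite -(big_mkord xpredT (fun j => alpha R p ^+ (j %/ (n %/ p)))).
set m := (n %/ p)%N.
have -> : n = (m * p)%N by rewrite /m divnK.
rewrite (sum_blocks (fun i => alpha R p ^+ i)) // big_mkord.
have : (alpha R p - 1) * (\sum_(i < p) alpha R p ^+ i) = 0 by rewrite -subrX1 alpha_p // subrr.
move/eqP; rewrite mulf_eq0 subr_eq0 (negbTE (alpha_neq1 _ p3)) /= => /eqP ->.
by rewrite mul0rn.
Qed.
Section Core.
Variables (R : realType) (n : nat).
Local Notation C := (CC R).
Local Notation M := 'M[C]_n.
Local Notation PG := (PGLq R n).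
Local Notation one := (@pgl_one R n).
Variables (A : set PG) (g0 : M).
Hypothesis g0u : g0 \in unitmx.
Hypothesis Ator : A `<=` max_torus g0.
Hypothesis Amul : forall x y, A x -> A y -> A (pgl_mul x y).
Hypothesis Aone : A one.
Hypothesis APGL : A `<=` @PGL R n.
Hypothesis n0 : (0 < n)%N.

Definition Dx (x : PG) : M := invmx g0 *m repr x *m g0.
Definition dd (x : PG) (i : 'I_n) : C := Dx x i i.
Definition rho (x : PG) (j i : 'I_n) : C := dd x j / dd x i.

Lemma repr_Dx x : g0 *m Dx x *m invmx g0 = repr x.
Proof.
by rewrite /Dx !mulmxA (mulmxV g0u) mul1mx -mulmxA (mulmxV g0u) mulmx1.
Qed.

Lemma Dx_spec x : A x -> Dx x = diag_mx (\row_i dd x i) /\ forall i, dd x i != 0.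
Proof.
move=> /Ator [D [/diag_mxP [e ->] Du] xE].
have [c c0 rE] := repr_pi (g0 *m diag_mx e *m invmx g0).
have DxE : Dx x = c *: diag_mx e.
  rewrite /Dx -xE rE -scalemxAr -scalemxAl !mulmxA (mulVmx g0u) mul1mx.
  by rewrite -mulmxA (mulVmx g0u) mulmx1.
have e0 : forall i, e 0 i != 0.
  move=> i; move: Du; rewrite unitmxE det_diag unitfE.
  by apply: contra => /eqP e0; rewrite (bigD1 i) //= e0 mul0r.
split.
  apply/matrixP => i j; rewrite /dd DxE !mxE.
  by case: (i =P j) => [->|_]; rewrite ?eqxx ?mulr0n ?mulr0 ?mulr1n.
by move=> i; rewrite /dd DxE !mxE eqxx mulr1n mulf_neq0.
Qed.

Lemma Dx_mul x y : exists2 l : C, l != 0 & Dx (pgl_mul x y) = l *: (Dx x *m Dx y).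
Proof.
have [l l0 rE] := repr_pi (repr x *m repr y).
exists l => //; rewrite /Dx /pgl_mul rE -scalemxAr -scalemxAl; congr (_ *: _).
by rewrite !mulmxA -[invmx g0 *m repr x *m g0 *m invmx g0]mulmxA (mulmxV g0u) mulmx1.
Qed.

Lemma dd_mul x y : A x -> A y -> exists2 l : C, l != 0 &
  forall i, dd (pgl_mul x y) i = l * (dd x i * dd y i).
Proof.
move=> Ax Ay; have [l l0 E] := Dx_mul x y; exists l => // i.
rewrite /dd E mxE; congr (_ * _).
rewrite [Dx x](Dx_spec Ax).1 mul_diag_mx mxE [in RHS]mxE.
by rewrite mxE eqxx mulr1n.
Qed.

Lemma rho_mul x y : A x -> A y -> forall j i,
  rho (pgl_mul x y) j i = rho x j i * rho y j i.
Proof.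
move=> Ax Ay j i; have [l l0 E] := dd_mul Ax Ay.
rewrite /rho !E invfM mulrACA mulfV // mul1r.
by rewrite invfM mulrACA.
Qed.

Lemma dd_neq0 x i : A x -> dd x i != 0.
Proof. by move=> Ax; exact: (Dx_spec Ax).2. Qed.

Lemma Dx_one : exists2 c : C, c != 0 & Dx one = c%:M.
Proof.
have [c c0 E] := repr_pi (1%:M : M); exists c => //.
rewrite /Dx /pgl_one E -scalemxAr -scalemxAl mulmx1 (mulVmx g0u).
by rewrite -mul_scalar_mx mulmx1.
Qed.

Lemma rho_one j i : rho one j i = 1.
Proof.
have [c c0 E] := Dx_one.
by rewrite /rho /dd E !mxE !eqxx !mulr1n mulfV.
Qed.

Lemma tr_Dx x : \tr (Dx x) = \tr (repr x).
Proof. by rewrite /Dx mxtrace_mulC mulmxA (mulmxV g0u) mul1mx. Qed.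

Lemma const_one x (i0 : 'I_n) : A x -> (forall i, dd x i = dd x i0) -> x = one.
Proof.
move=> Ax H.
have E : Dx x = (dd x i0)%:M.
  rewrite (Dx_spec Ax).1; apply/matrixP => i j; rewrite !mxE H.
  by case: (i == j).
rewrite -(piK x) -repr_Dx E mul_mx_scalar -scalemxAl mulmxV // /pgl_one.
by rewrite pi_scale // dd_neq0.
Qed.


Lemma mul_cancel a b y : @PGL R n y -> pgl_mul a y = pgl_mul b y -> a = b.
Proof.
rewrite /PGL /= => yu /piP [c c0 E].
have : repr b = c *: repr a.
  by have := congr1 (mulmx^~ (invmx (repr y))) E; rewrite -scalemxAl -!mulmxA (mulmxV yu) !mulmx1.
by move=> E'; rewrite -(piK a) -(piK b) E' pi_scale.
Qed.

Variables (N : nat) (f : 'I_N -> PG).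
Hypothesis fA : forall k, A (f k).
Hypothesis finj : injective f.
Hypothesis fsurj : forall x, A x -> exists k, f k = x.
Hypothesis Htr : forall x, A x -> x <> one -> \tr (repr x) = 0.

Lemma charsum (chi : PG -> C) y :
  (forall x z, A x -> A z -> chi (pgl_mul x z) = chi x * chi z) ->
  A y -> chi y != 1 -> \sum_k chi (f k) = 0.
Proof.
move=> chiM Ay chiy.
pose h (k : 'I_N) := odflt k [pick l | `[< f l = pgl_mul (f k) y >] ].
have hE k : f (h k) = pgl_mul (f k) y.
  rewrite /h; case: pickP => [l /asboolP //|H].
  have [l Hl] := fsurj (Amul (fA k) Ay).
  by move: (H l); rewrite (asboolT Hl).
have hinj : injective h.
  move=> k l hkl; apply: finj; apply: (mul_cancel (APGL Ay)).
  by rewrite -!hE hkl.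
have : \sum_k chi (f k) = chi y * \sum_k chi (f k).
  rewrite {1}(reindex_inj hinj) /= mulr_sumr; apply: eq_bigr => k _.
  by rewrite hE (chiM _ _ (fA k) Ay) mulrC.
move/eqP; rewrite -subr_eq0 -{1}(mul1r (\sum_k _)) -mulrBl mulf_eq0.
by rewrite subr_eq0 eq_sym (negbTE chiy) => /eqP.
Qed.

Definition Sset (psi : PG -> C) (i : 'I_n) : {set 'I_n} :=
  [set j | [forall k, rho (f k) j i == psi (f k)]].

Lemma count_S psi i :
  (forall x z, A x -> A z -> psi (pgl_mul x z) = psi x * psi z) ->
  (forall x, A x -> psi x != 0) ->
  (#|Sset psi i|)%:R * N%:R = n%:R :> C.
Proof.
move=> psiM psi0.
have oneone : pgl_mul one one = one by rewrite /pgl_one mul_pi mulmx1.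
have psi1 : psi one = 1.
  apply: (mulfI (psi0 _ Aone)); rewrite mulr1 -psiM //.
  by rewrite oneone.
have [k0 fk0] := fsurj Aone.
pose T j k := rho (f k) j i / psi (f k).
have E1 : \sum_j \sum_k T j k = (#|Sset psi i|)%:R * N%:R.
  rewrite (eq_bigr (fun j => if j \in Sset psi i then N%:R else 0)).
    by rewrite -big_mkcond sumr_const mulr_natl.
  move=> j _; case: (boolP (j \in Sset psi i)) => jS.
    rewrite (eq_bigr (fun _ => 1)) ?sumr_const ?card_ord //.
    move=> k _; rewrite /T; move: jS; rewrite inE => /forallP /(_ k) /eqP ->.
    by rewrite divff // psi0.
  move: jS; rewrite inE negb_forall => /existsP [k hk].
  apply: (@charsum (fun x => rho x j i / psi x) (f k)) => //.
    move=> x z Ax Az; rewrite rho_mul // psiM // invfM mulrACA //.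
  apply: contra hk => /eqP h; apply/eqP.
  by rewrite -[rho _ j i](divfK (psi0 _ (fA k))) h mul1r.
have E2 : \sum_j \sum_k T j k = n%:R.
  rewrite exchange_big (bigD1 k0) //= [X in _ + X]big1.
    rewrite addr0 (eq_bigr (fun _ => 1)) ?sumr_const ?card_ord //.
    by move=> j _; rewrite /T fk0 rho_one psi1 divr1.
  move=> k kk0.
  have fk1 : f k <> one by move=> fk; move: kk0; rewrite -fk0 in fk; rewrite (finj fk) eqxx.
  have trk := Htr (fA k) fk1.
  rewrite /T /rho -!mulr_suml.
  have -> : \sum_j dd (f k) j = 0.
    by rewrite -[in RHS]trk -tr_Dx.
  by rewrite !mul0r.
by rewrite -E1 E2.
Qed.

Lemma Sset_eq i i' phi : (forall k, dd (f k) i = dd (f k) i') -> Sset phi i = Sset phi i'.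
Proof.
move=> H; apply/setP => l; rewrite !inE; apply: eq_forallb => k.
by rewrite /rho H.
Qed.

Lemma perm_exists psi :
  (forall x z, A x -> A z -> psi (pgl_mul x z) = psi x * psi z) ->
  (forall x, A x -> psi x != 0) ->
  exists s : 'S_n, forall i k, rho (f k) (s i) i = psi (f k).
Proof.
move=> psiM psi0.
pose ones := fun _ : PG => 1 : C.
have onesM : forall x z, A x -> A z -> ones (pgl_mul x z) = ones x * ones z.
  by move=> *; rewrite /ones mulr1.
have ones0 : forall x, A x -> ones x != 0 by move=> *; exact: oner_neq0.
have [k0 _] := fsurj Aone.
have N0 : N%:R != 0 :> C by rewrite pnatr_eq0 -lt0n (leq_ltn_trans (leq0n _) (ltn_ord k0)).
have cnt i : #|Sset psi i| = #|Sset ones i|.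
  have := count_S i psiM psi0; rewrite -(count_S i onesM ones0) => /(mulIf N0) /eqP.
  by rewrite eqr_nat => /eqP.
have iin i : i \in Sset ones i.
  by rewrite inE; apply/forallP => k; rewrite /rho divff ?dd_neq0.
pose s0 i := nth i (enum (Sset psi i)) (index i (enum (Sset ones i))).
have idx i : (index i (enum (Sset ones i)) < size (enum (Sset psi i)))%N.
  by rewrite -cardE cnt cardE index_mem mem_enum.
have s0S i : s0 i \in Sset psi i by rewrite -mem_enum mem_nth.
have s0inj : injective s0.
  move=> i i' E.
  have Hd : forall k, dd (f k) i = dd (f k) i'.
    move=> k; have := s0S i; have := s0S i'; rewrite E !inE.
    move=> /forallP /(_ k) /eqP h' /forallP /(_ k) /eqP h.
    have : rho (f k) (s0 i') i = rho (f k) (s0 i') i' by rewrite h h'.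
    rewrite /rho => /(mulfI (dd_neq0 _ (fA k))) /invr_inj //.
  have E1 := Sset_eq psi Hd; have E2 := Sset_eq ones Hd.
  have idi := idx i; rewrite E1 E2 in idi.
  move: E; rewrite /s0 (set_nth_default i' i (idx i)) E1 E2.
  move/eqP; rewrite nth_uniq ?enum_uniq // => /eqP Ei.
  have ie : i \in enum (Sset ones i) by rewrite mem_enum.
  have ie' : i' \in enum (Sset ones i') by rewrite mem_enum.
  have := nth_index i ie; rewrite E2 Ei.
  by rewrite (set_nth_default i' i) ?nth_index // index_mem.
exists (perm s0inj) => i k; rewrite permE.
have := s0S i; rewrite inE => /forallP /(_ k) /eqP //.
Qed.

Lemma G_comm psi (s : 'S_n) : (forall i k, rho (f k) (s i) i = psi (f k)) ->
  forall x, A x ->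
  (g0 *m perm_mx s *m invmx g0) *m repr x = psi x *: (repr x *m (g0 *m perm_mx s *m invmx g0)).
Proof.
move=> Hs x Ax; have [k fk] := fsurj Ax.
have PD : perm_mx s *m Dx x = psi x *: (Dx x *m perm_mx s).
  rewrite (Dx_spec Ax).1 mul_mx_diag mul_diag_mx; apply/matrixP => i j.
  rewrite !mxE.
  case: (s i =P j) => [<-|_]; rewrite ?eqxx ?mulr1 ?mulr0 ?mul0r ?mulr1n ?mulr0n //.
  by rewrite -fk -(Hs i k) /rho mul1r divfK // dd_neq0.
move: PD (repr_Dx x); move: (Dx x) => D PD RE; rewrite -RE.
rewrite !mulmxA -[g0 *m perm_mx s *m invmx g0 *m g0]mulmxA (mulVmx g0u) mulmx1.
rewrite -[g0 *m perm_mx s *m D]mulmxA PD -scalemxAr -!scalemxAl; congr (_ *: _).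
by rewrite -[g0 *m D *m invmx g0 *m g0]mulmxA (mulVmx g0u) mulmx1 !mulmxA.
Qed.

Lemma G_unit (s : 'S_n) : (g0 *m perm_mx s *m invmx g0) \in unitmx.
Proof. by rewrite !unitmx_mul g0u unitmx_perm unitmx_inv g0u. Qed.
End Core.
Section Top.
Variables (R : realType) (n : nat).
Local Notation C := (CC R).
Local Notation M := 'M[C]_n.
Local Notation PG := (PGLq R n).

Lemma open_quot (U : set PG) : open (@pgl_pi R n @^-1` U) -> open U.
Proof. by []. Qed.

Lemma cont_sum (T : topologicalType) (I : Type) (r : seq I) (h : I -> T -> C) x :
  (forall k, {for x, continuous (h k)}) -> {for x, continuous (fun y => \sum_(k <- r) h k y)}.
Proof.
move=> hc; elim: r => [|a r IH].
  have -> : (fun y => \sum_(k <- [::]) h k y) = fun _ => 0 by apply: funext => y; rewrite big_nil.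
  exact: cst_continuous.
have -> : (fun y => \sum_(k <- a :: r) h k y) = fun y => h a y + \sum_(k <- r) h k y.
  by apply: funext => y; rewrite big_cons.
exact: (continuousD (hc a) IH).
Qed.


Lemma cont_F (X : M) (c : C) i j : continuous (fun G : M => (G *m X - c *: (X *m G)) i j).
Proof.
move=> G0.
have -> : (fun G : M => (G *m X - c *: (X *m G)) i j) =
  (fun G => \sum_(k <- index_enum 'I_n) (G i k * X k j) - c * \sum_(k <- index_enum 'I_n) (X i k * G k j)).
  by apply: funext => G; rewrite !mxE.
have c1 : {for G0, continuous (fun G : M => \sum_(k <- index_enum 'I_n) (G i k * X k j))}.
  apply: cont_sum => k.
  exact: (continuousM (@coord_continuous C n n i k G0) (@cst_continuous _ _ (X k j) G0)).
have c2 : {for G0, continuous (fun G : M => \sum_(k <- index_enum 'I_n) (X i k * G k j))}.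
  apply: cont_sum => k.
  exact: (continuousM (@cst_continuous _ _ (X i k) G0) (@coord_continuous C n n k j G0)).
exact: (continuousB c1 (continuousM (@cst_continuous _ _ c G0) c2)).
Qed.

Definition Yc (X : M) (c : C) : set PG := [set y | repr y *m X = c *: (X *m repr y)].

Lemma Yc_key X c (G : M) : Yc X c (pgl_pi G) <-> G *m X = c *: (X *m G).
Proof.
rewrite /Yc /=; have [d d0 ->] := repr_pi G.
rewrite -scalemxAl -scalemxAr scalerA mulrC -scalerA; split => [|-> //].
by move/(congr1 (fun M => d^-1 *: M)); rewrite !scalerA mulVf // scale1r mulKf.
Qed.

Lemma Yc_closed X c : closed (Yc X c).
Proof.
rewrite -openC; apply: open_quot.
have -> : @pgl_pi R n @^-1` (~` Yc X c) =
    ~` \bigcap_(i in setT) \bigcap_(j in setT)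
        ((fun G : M => (G *m X - c *: (X *m G)) i j) @^-1` [set 0]).
  rewrite predeqE => G /=; rewrite Yc_key; split => H1 H2; apply: H1.
    by apply/eqP; rewrite -subr_eq0; apply/eqP/matrixP => i j; rewrite (H2 i I j I) mxE.
  by move=> i _ j _ /=; rewrite H2 subrr mxE.
rewrite openC; apply: closed_bigI => i _; apply: closed_bigI => j _.
apply: preimage_closed; last exact: (accessible_closed_set1 (hausdorff_accessible (@norm_hausdorff C C^o))).
by move=> G _; exact: cont_F.
Qed.
End Top.
Section Fin.
Variables (R : realType) (n : nat).
Local Notation C := (CC R).
Local Notation M := 'M[C]_n.
Local Notation PG := (PGLq R n).
Local Notation one := (@pgl_one R n).

Lemma unit_neq0 (U : M) : (0 < n)%N -> U \in unitmx -> U != 0.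
Proof.
move=> n0 Uu; apply/eqP => U0.
have := mulmxV Uu; rewrite U0 mul0mx => /matrixP /(_ (Ordinal n0) (Ordinal n0)).
by rewrite !mxE eqxx /= => /eqP; rewrite eq_sym oner_eq0.
Qed.

Lemma exp_scalar (x : PG) k : pgl_exp x k = one ->
  exists2 l : C, l != 0 & mpow (repr x) k = l%:M.
Proof.
rewrite exp_pi /pgl_one => /piP [c c0 E]; exists c^-1; first by rewrite invr_eq0.
by rewrite -scalemx1 E scalerA mulVf // scale1r.
Qed.

Lemma order_lemma (p : nat) (x : PG) : prime p -> pgl_exp x p = one -> x <> one ->
  pgl_has_order x p.
Proof.
move=> pp xp x1; split; [exact: prime_gt0 | exact: xp | ].
move=> j /andP [j0 jp] xj.
have [l l0 El] := exp_scalar xp.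
have [m m0 Em] := exp_scalar xj.
have [a _ Ha] := Bezoutl j (prime_gt0 pp).
have cop : coprime p j by rewrite prime_coprime // gtnNdvd.
move: Ha; rewrite (eqP cop) => Ha.
set b := ((1 + a * j) %/ p)%N.
have Eb : (1 + a * j = p * b)%N by rewrite /b [(p * _)%N]mulnC divnK.
have : mpow (repr x) (1 + a * j) = mpow (repr x) (p * b) by rewrite Eb.
rewrite mpowD (mulnC a j) !mpowM El Em !mpow_scalar /= mulmx1.
move=> E.
have Ex : repr x = (l ^+ b / m ^+ a) *: 1%:M.
  have := congr1 (mulmx^~ ((m ^+ a)^-1)%:M) E.
  rewrite -mulmxA -scalar_mxM mulfV ?expf_neq0 // mulmx1 => ->.
  by rewrite -scalar_mxM scalemx1.
apply: x1; rewrite -(piK x) Ex pi_scale //.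
by rewrite mulf_neq0 ?invr_eq0 ?expf_neq0.
Qed.

Lemma conj_tr (p : nat) (x : PG) : prime p -> (2 < p)%N -> (p %| n)%N -> (0 < n)%N ->
  pgl_conjugate x (e_elt R n p) -> \tr (repr x) = 0.
Proof.
move=> pp p3 pn n0 [g gu].
change (pgl_mul (pgl_pi (repr g *m repr x)) (pgl_pi (invmx (repr g))) = e_elt R n p -> \tr (repr x) = 0).
rewrite mul_pi /e_elt => /piP [c c0 E].
have := tr_e R pp p3 pn n0; rewrite E mxtraceZ mxtrace_mulC mulmxA (mulVmx gu) mul1mx.
by move/eqP; rewrite mulf_eq0 (negbTE c0) /= => /eqP.
Qed.

Lemma bigU_mem (I : eqType) (s : seq I) (F : I -> set PG) y :
  (\big[setU/set0]_(k <- s) F k) y <-> exists2 k, k \in s & F k y.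
Proof.
elim: s => [|a s IH]; first by rewrite big_nil; split => // [[k]].
rewrite big_cons; split.
  case => [Fa|/IH [k ks Fk]]; first by exists a => //; rewrite mem_head.
  by exists k => //; rewrite in_cons ks orbT.
move=> [k]; rewrite in_cons => /orP [/eqP -> Fa|ks Fk]; first by left.
by right; apply/IH; exists k.
Qed.
End Fin.

Theorem corollary4p30 (R : realType) (n p s r : nat) (A : set (PGLq R n)) :
  prime p -> odd p ->
  (p ^ s %| n)%N -> ~~ (p ^ s.+1 %| n)%N -> (1 <= s)%N ->
  (1 <= r)%N -> (r <= s)%N ->
  elem_abelian_psubgroup p r A -> toral A ->
  connected (centralizer A) ->
  exists2 x, A x & pgl_has_order x p /\ ~ pgl_conjugate x (@e_elt R n p).
Proof.
move=> pp op psn npsn s1 r1 rs [[AP A1 Amul Ainv] [Acomm Aexp Acard]] [g0 g0u Ator] Hconn.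
have p3 : (2 < p)%N.
  rewrite ltn_neqAle prime_gt1 // andbT; apply/eqP => p2; by rewrite -p2 in op.
have n0 : (0 < n)%N by rewrite lt0n; apply: contraNneq npsn => ->; exact: dvdn0.
have pn : (p %| n)%N := dvdn_trans (dvdn_exp s1 (dvdnn p)) psn.
case: (pselect (exists2 x, A x & pgl_has_order x p /\ ~ pgl_conjugate x (e_elt R n p))) => // Hno.
exfalso.
have Htr : forall x, A x -> x <> pgl_one R n -> \tr (repr x) = 0.
  move=> x Ax x1; apply: (conj_tr pp p3 pn n0).
  apply: contrapT => nc; apply: Hno; exists x => //; split => //.
  exact: order_lemma pp (Aexp x Ax) x1.
set N := (p ^ r)%N.
have /card_bijP [g [ginv gK ginvK]] := Acard.
pose f (k : 'I_N) : PGLq R n := val (ginv (SigSub (@mem_set _ [set: 'I_N] k I))).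
have fA : forall k, A (f k) by move=> k; exact: set_valP.
have finj : injective f.
  move=> k l /val_inj /(congr1 g); rewrite !ginvK => /(congr1 val) //.
have fsurj : forall x, A x -> exists k, f k = x.
  move=> x Ax; exists (val (g (SigSub (mem_set Ax)))); rewrite /f.
  have -> : SigSub (@mem_set _ [set: 'I_N] (val (g (SigSub (mem_set Ax)))) I) = g (SigSub (mem_set Ax)).
    exact: val_inj.
  by rewrite gK.
have N1 : (1 < N)%N.
  apply: (leq_trans (prime_gt1 pp)); rewrite -{1}(expn1 p) leq_pexp2l // prime_gt0 //.
pose k0 : 'I_N := Ordinal (ltnW N1).
pose k1 : 'I_N := Ordinal N1.
have [x1 [Ax1 x1n]] : exists x1, A x1 /\ x1 <> pgl_one R n.
  case: (pselect (f k0 = pgl_one R n)) => h; [exists (f k1) | exists (f k0)]; split => //.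
  move=> h1; have : f k0 = f k1 by rewrite h h1.
  by move/finj/(congr1 val).
pose i0 : 'I_n := Ordinal n0.
have [i1 hi1] : exists i1, dd g0 x1 i1 != dd g0 x1 i0.
  apply: contrapT => H; apply: x1n; apply: (const_one g0u Ator (i0:=i0) Ax1) => i.
  apply/eqP; apply: contrapT => h; apply: H; exists i; exact/negP.
pose psi x := rho g0 x i1 i0.
have psiM : forall x z, A x -> A z -> psi (pgl_mul x z) = psi x * psi z.
  by move=> x z Ax Az; exact: (rho_mul g0u Ator Ax Az i1 i0).
have psi0 : forall x, A x -> psi x != 0.
  by move=> x Ax; rewrite /psi /rho mulf_neq0 ?invr_eq0 ?(dd_neq0 g0u Ator).
have [sg Hsg] := perm_exists g0u Ator Amul A1 AP fA finj fsurj Htr psiM psi0.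
set G := g0 *m perm_mx sg *m invmx g0.
have GC : forall x, A x -> G *m repr x = psi x *: (repr x *m G).
  by move=> x Ax; exact: (G_comm g0u Ator fA fsurj Hsg Ax).
have Gu : G \in unitmx := G_unit g0u sg.
pose gg := pgl_pi G.
have [cg cg0 Eg] := repr_pi G.
have centg : centralizer A gg.
  split; first by rewrite /PGL /= Eg unitmxZ ?unitfE.
  move=> x Ax; rewrite /pgl_mul Eg -scalemxAl -scalemxAr !pi_scale // GC //.
  by rewrite pi_scale // psi0.
have [c1 c10 E1] := repr_pi (1%:M : 'M[CC R]_n).
have oneC : centralizer A (pgl_one R n).
  split; first by rewrite /PGL /= /pgl_one E1 unitmxZ ?unitfE ?unitmx1.
  move=> x Ax; rewrite /pgl_mul /pgl_one E1 -scalemxAl -scalemxAr mul1mx mulmx1.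
  by [].
set X1 := repr x1.
have X1u : X1 \in unitmx := AP x1 Ax1.
have [lam lam0 Elam] := exp_scalar (Aexp x1 Ax1).
have prim := alpha_prim R p3 pp.
pose U : set (PGLq R n) := ~` (\big[setU/set0]_(k <- enum 'I_p)
   (if (0 < k)%N then Yc X1 (alpha R p ^+ k) else set0)).
have key : forall y, centralizer A y -> (Yc X1 1 y <-> U y).
  move=> y [yu ycomm]; split.
    move=> Y1 /bigU_mem [k _]; case: ifP => // k0' Yk.
    move: Y1; rewrite /Yc /= Yk => /eqP; rewrite -subr_eq0 -scalerBl scalemx_eq0 subr_eq0.
    rewrite (negbTE (unit_neq0 n0 _)) ?unitmx_mul ?X1u // orbF.
    by rewrite -(prim_order_dvd prim) gtnNdvd.
  move=> Uy; have := ycomm x1 Ax1; rewrite /pgl_mul => /piP [c c0 E].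
  have E' : repr y *m X1 = c^-1 *: (X1 *m repr y) by rewrite E scalerA mulVf // scale1r.
  have Epow : forall k, repr y *m mpow X1 k = c^-1 ^+ k *: (mpow X1 k *m repr y).
    elim => [|k IH] /=; first by rewrite mul1mx mulmx1 expr0 scale1r.
    rewrite mulmxA E' -scalemxAl -mulmxA IH -scalemxAr scalerA mulmxA exprS //.
  have cp : c^-1 ^+ p = 1.
    have := Epow p; rewrite Elam mul_mx_scalar mul_scalar_mx scalerA => /eqP.
    rewrite -subr_eq0 -scalerBl scalemx_eq0 (negbTE (unit_neq0 n0 yu)) orbF.
    rewrite -{1}(mul1r lam) -mulrBl mulf_eq0 (negbTE lam0) orbF subr_eq0 eq_sym.
    by move/eqP.
  have [i Ei] := prim_rootP prim cp.
  case: (posnP i) => [ie|ipos].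
    by rewrite /Yc /= E' Ei ie expr0.
  exfalso; apply: Uy; apply/bigU_mem; exists i; first by rewrite mem_enum.
  by rewrite ipos /Yc /= E' Ei.
have HB := Hconn (centralizer A `&` Yc X1 1).
have EB : centralizer A `&` Yc X1 1 = centralizer A.
  apply: HB.
  - exists (pgl_one R n); split => //.
    by rewrite /Yc /= /pgl_one E1 scale1r -scalemxAl -scalemxAr mul1mx mulmx1.
  - exists U.
      rewrite /U openC; apply: closed_bigsetU => k _; case: ifP => _.
        exact: Yc_closed.
      exact: closed0.
    rewrite predeqE => y; split => [[cy Yy]|[cy Uy]]; split => //.
      exact/(key y cy).
    exact/(key y cy).
  - by exists (Yc X1 1) => //; exact: Yc_closed.
have : Yc X1 1 gg by have := centg; rewrite -EB => -[].
rewrite /Yc /= /gg Eg -scalemxAl -scalemxAr GC // scale1r scalerA => /eqP.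
have XG : repr x1 *m G != 0 by apply: (unit_neq0 n0); rewrite unitmx_mul X1u Gu.
rewrite -subr_eq0 -scalerBl scalemx_eq0 (negbTE XG) orbF.
rewrite -{2}(mulr1 cg) -mulrBr mulf_eq0 (negbTE cg0) /= subr_eq0 => /eqP h.
move: hi1; rewrite -[dd g0 x1 i1](divfK (dd_neq0 g0u Ator i0 Ax1)).
by rewrite -/(rho g0 x1 i1 i0) -/(psi x1) h mul1r eqxx.
Qed.
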